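(* (a) $crx_1(K_n)=crx_2(K_n)=3$ for every $n\ge 3$. (b) For every $k\ge 3$ there exists $N=N(k)$ such that $crx_k(K_n)=2k-1$ for all $n\ge N$.
   Context: $K_n$ is the complete graph on $n$ vertices. An edge-coloured cycle is rainbow if its edges have distinct colours. For a graph $G$ in which any $k$ vertices lie on a common cycle, $crx_k(G)$ is the minimum number of colours in an edge-colouring of $G$ such that every set of $k$ vertices of $G$ lies in some rainbow cycle. *)

(* Defs.v *)
From mathcomp Require Import all_boot.
Set Implicit Arguments. Unset Strict Implicit. Unset Printing Implicit Defensive.

(* An edge-colouring of K_n with
   (at most) m colours is a symmetric map c : 'I_n -> 'I_n -> 'I_m; the
   colour of edge {u,v} (u != v) is c u v (values on the diagonal are
   irrelevant). *)
Definition sym_colouring (n m : nat) (c : 'I_n -> 'I_n -> 'I_m) : Prop :=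
  forall u v, c u v = c v u.

(* A cycle of K_n: a duplicate-free cyclic sequence of at least 3 vertices;
   its edges are the consecutive pairs (s_i, s_{i+1}) and (last, first). *)
Definition is_cycle (n : nat) (s : seq 'I_n) : bool :=
  uniq s && (3 <= size s).

Definition cycle_colours (n m : nat) (c : 'I_n -> 'I_n -> 'I_m) (s : seq 'I_n)
  : seq 'I_m := [seq c p.1 p.2 | p <- zip s (rot 1 s)].

Definition rainbow_cycle (n m : nat) (c : 'I_n -> 'I_n -> 'I_m) (s : seq 'I_n)
  : bool := is_cycle s && uniq (cycle_colours c s).

Definition k_rainbow_cycle_colouring (n k m : nat)
  (c : 'I_n -> 'I_n -> 'I_m) : Prop :=
  forall S : {set 'I_n}, #|S| = k ->
    exists s : seq 'I_n, @rainbow_cycle n m c s && (S \subset [set x in s]).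

Definition crx_colourable (n k m : nat) : Prop :=
  exists c : 'I_n -> 'I_n -> 'I_m,
    @sym_colouring n m c /\ @k_rainbow_cycle_colouring n k m c.

Definition crx_Kn_eq (k n m : nat) : Prop :=
  crx_colourable n k m /\ forall m', m' < m -> ~ crx_colourable n k m'.

(* Main.v *)
Require Import Defs.
From mathcomp Require Import all_boot all_algebra ring zify.
Set Implicit Arguments. Unset Strict Implicit. Unset Printing Implicit Defensive.

Fixpoint tzf (B f z : nat) : nat :=
  if f is f'.+1 then (if (0 < z) && (B %| z) then (tzf B f' (z %/ B)).+1 else 0) else 0.
Definition tz B z := tzf B z z.
Definition phi B z := (z %/ B ^ (tz B z).+1) %% B.

Lemma tzf_spec B f t y : 1 < B -> 0 < y -> ~~ (B %| y) -> t < f -> tzf B f (B^ t * y) = t.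
Proof.
move=> B1 y0 ndy; elim: t f => [|t IH] [|f] //= tf.
  by rewrite expn0 mul1n y0 (negbTE ndy).
have -> : (0 < B ^ t.+1 * y) by rewrite muln_gt0 expn_gt0 y0 (ltnW B1).
rewrite expnS -mulnA dvdn_mulr //= mulKn ?(ltnW B1) // IH //.
Qed.

Lemma phi_spec B t y : 1 < B -> 0 < y -> ~~ (B %| y) -> phi B (B^ t * y) = (y %/ B) %% B.
Proof.
move=> B1 y0 ndy; rewrite /phi /tz tzf_spec //; last first.
  apply: (leq_trans (ltn_expl t B1)); by rewrite leq_pmulr.
by rewrite expnSr divnMl // expn_gt0 (ltnW B1).
Qed.

Lemma modB_aux B b' e k : 0 < B -> b' < B -> e < B ->
  ((b' + B - e) %% B + (k * B + e)) %% B = b'.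
Proof.
move=> B0 bB eB; rewrite modnDml addnCA subnK; last by rewrite ltnW // ltn_addl.
by rewrite [b' + B]addnC addnA -mulSnr modnMDl modn_small.
Qed.

Lemma mech B t d a' b' : 1 < B -> 0 < d -> ~~ (B %| d) -> a' < B -> b' < B ->
  exists R, R < B ^ (t + 4) /\ forall i,
    phi B (R + B ^ (t + 4) * i) = a' /\ phi B (R + B ^ (t + 4) * i + B ^ t * d) = b'.
Proof.
move=> B1 d0 nd a'B b'B.
have B0 : 0 < B by apply: ltnW.
set r := (b' + B - (d %/ B) %% B) %% B.
have rB : r < B by rewrite ltn_mod.
have rd : (r + d %/ B) %% B = b'.
  by rewrite /r {2}(divn_eq (d %/ B) B) modB_aux // ltn_mod.
have dmod : d %% B != 0 by [].
case: (posnP r) => [r0|rpos].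
-
  have b'e : b' = (d %/ B) %% B by rewrite -rd r0 add0n.
  exists (B ^ t.+2 * (1 + B * a')); split.
    have -> : B ^ (t + 4) = B ^ t.+2 * (B * B) by rewrite addn4 !expnS; ring.
    rewrite ltn_pmul2l ?expn_gt0 ?B0 //.
    nia.
  move=> i.
  have -> : B ^ t.+2 * (1 + B * a') + B ^ (t + 4) * i = B ^ t.+2 * ((a' + B * i) * B + 1).
    rewrite addn4 !expnS; ring.
  split.
    rewrite phi_spec //; [| by rewrite addn1 | by rewrite /dvdn modnMDl modn_small].
    by rewrite divnMDl // divn_small // addn0 addnC mulnC modnMDl modn_small.
  have -> : B ^ t.+2 * ((a' + B * i) * B + 1) + B ^ t * d =
       B ^ t * ((((a' + B * i) * B + 1) * B) * B + d) by rewrite !expnS; ring.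
  rewrite phi_spec //; last by rewrite /dvdn modnMDl.
    by rewrite divnMDl // modnMDl.
  by rewrite addn_gt0 d0 orbT.
- exists (B ^ t.+1 * (r + B * a')); split.
    have -> : B ^ (t + 4) = B ^ t.+1 * (B * B * B) by rewrite addn4 !expnS; ring.
    rewrite ltn_pmul2l ?expn_gt0 ?B0 //.
    nia.
  move=> i.
  have -> : B ^ t.+1 * (r + B * a') + B ^ (t + 4) * i = B ^ t.+1 * ((a' + B * B * i) * B + r).
    rewrite addn4 !expnS; ring.
  split.
    rewrite phi_spec //; last first.
      by rewrite /dvdn modnMDl modn_small // -lt0n.
      by rewrite addn_gt0 rpos orbT.
    by rewrite divnMDl // divn_small // addn0 -mulnA [B * _]mulnC addnC modnMDl modn_small.
  have -> : B ^ t.+1 * ((a' + B * B * i) * B + r) + B ^ t * d =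
       B ^ t * (((a' + B * B * i) * B + r) * B + d) by rewrite expnS; ring.
  rewrite phi_spec //; last first.
    by rewrite /dvdn modnMDl.
    by rewrite addn_gt0 d0 orbT.
  by rewrite divnMDl // -modnDml modnMDl modnDml.
Qed.

Lemma noise B w j : 1 < B -> w %% B != 0 -> phi B (w + B ^ 2 * j) = (w %/ B) %% B.
Proof.
move=> B1 wB; have B0 : 0 < B by apply: ltnW.
have -> : w + B ^ 2 * j = B ^ 0 * ((B * j) * B + w) by rewrite expn0 mul1n; ring.
rewrite phi_spec //; last by rewrite /dvdn modnMDl.
  by rewrite divnMDl // [B * j]mulnC modnMDl.
rewrite addn_gt0; case: (posnP w) => [w0|wp]; last by rewrite orbT.
by move: wB; rewrite w0 mod0n.
Qed.

Lemma val_dec B x : 1 < B -> 0 < x -> exists t d, x = B ^ t * d /\ 0 < d /\ ~~ (B %| d).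
Proof.
move=> B1; elim: x {-2}x (leqnn x) => [|m IH] x xm x0; first by lia.
case dx: (B %| x); last by exists 0, x; rewrite expn0 mul1n x0 dx.
have B0 : 0 < B by apply: ltnW.
have x' : x %/ B < x by rewrite ltn_Pdiv.
have x'0 : 0 < x %/ B by rewrite divn_gt0 // dvdn_leq.
have hm : x %/ B <= m by move: x' xm; move: (x %/ B) => y; lia.
have [t [d [e [d0 nd]]]] := IH (x %/ B) hm x'0.
exists t.+1, d; split => //.
by rewrite expnS -mulnA -e mulnC divnK.
Qed.

Lemma modfix q a n : 0 < q -> a < q -> (((a + (q - n %% q)) %% q) + n) %% q = a.
Proof.
move=> q0 aq; rewrite modnDml.
have hl : n %% q < q by rewrite ltn_mod.
have e := divn_eq n q.
have -> : a + (q - n %% q) + n = (n %/ q).+1 * q + a.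
  rewrite mulSnr; move: (n %/ q * q) (n %% q) hl e => u v; lia.
by rewrite modnMDl modn_small.
Qed.

Lemma comb q B B' t d al be : 0 < q -> 1 < B -> 2 < B' -> coprime B B' -> q <= B ->
  0 < d -> ~~ (B %| d) -> al < q -> be < q ->
  exists R, forall z, z %% (B ^ (t + 4) * B' ^ 2) = R %% (B ^ (t + 4) * B' ^ 2) ->
    (phi B z + phi B' z) %% q = al /\ (phi B (z + B ^ t * d) + phi B' (z + B ^ t * d)) %% q = be.
Proof.
move=> q0 B1 B'2 cop qB d0 nd alq beq.
have B'1 : 1 < B' by apply: ltnW.
have B'0 : 0 < B' by apply: ltnW.
set δ := B ^ t * d.
pose r2 := if (1 + δ) %% B' != 0 then 1 else 2.
have r2B : r2 %% B' != 0.
  by rewrite /r2; case: ifP => _; rewrite modn_small // ltnW.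
have r2dB : (r2 + δ) %% B' != 0.
  rewrite /r2; case: ifP => // /negbFE /eqP h.
  by rewrite -add1n -addnA -modnDmr h addn0 modn_small.
pose n1 := (r2 %/ B') %% B'.
pose n2 := ((r2 + δ) %/ B') %% B'.
pose al' := (al + (q - n1 %% q)) %% q.
pose be' := (be + (q - n2 %% q)) %% q.
have al'B : al' < B by apply: leq_trans qB; rewrite ltn_mod.
have be'B : be' < B by apply: leq_trans qB; rewrite ltn_mod.
have [R1 [R1lt HR1]] := mech t B1 d0 nd al'B be'B.
exists (chinese (B ^ (t + 4)) (B' ^ 2) R1 r2) => z hz.
have copX : coprime (B ^ (t + 4)) (B' ^ 2) by rewrite coprimeXl // coprimeXr.
have zm1 : z %% B ^ (t + 4) = R1.
  have hd1 : B ^ (t + 4) %| B ^ (t + 4) * B' ^ 2 by apply: dvdn_mulr.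
  rewrite -(modn_dvdm z hd1) hz (modn_dvdm _ hd1) chinese_modl //.
  by rewrite modn_small.
have zm2 : z %% B' ^ 2 = r2.
  have hd2 : B' ^ 2 %| B ^ (t + 4) * B' ^ 2 by apply: dvdn_mull.
  rewrite -(modn_dvdm z hd2) hz (modn_dvdm _ hd2) chinese_modr //.
  have r2le : r2 <= 2 by rewrite /r2; case: ifP.
  rewrite modn_small //; rewrite expnS expn1.
  by apply: leq_ltn_trans r2le _; apply: leq_trans B'2 _; rewrite leq_pmulr.
have z1 : z = R1 + B ^ (t + 4) * (z %/ B ^ (t + 4)).
  by rewrite {1}(divn_eq z (B ^ (t + 4))) zm1 addnC mulnC.
have z2 : z = r2 + B' ^ 2 * (z %/ B' ^ 2).
  by rewrite {1}(divn_eq z (B' ^ 2)) zm2 addnC mulnC.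
have [h1 h2] := HR1 (z %/ B ^ (t + 4)).
split.
  rewrite {1}z1 h1 {1}z2 noise //.
  by rewrite /al' modfix.
rewrite {1}z1 h2.
have -> : z + δ = (r2 + δ) + B' ^ 2 * (z %/ B' ^ 2) by rewrite {1}z2 addnAC.
by rewrite noise // /be' modfix.
Qed.

Definition col_nat q z := (phi q z + phi q.+1 z) %% q.
Definition NP q M := q ^ 4 * q.+1 ^ 2 * M.+2 * (q.+1 ^ 4 * q ^ 2 * M.+2).

Lemma Pnat q M δ n al be : 2 < q -> 0 < δ -> δ < n -> NP q M <= n -> al < q -> be < q ->
  exists R P, 0 < P /\ P * M.+2 <= n /\
    forall z, z %% P = R %% P -> col_nat q z = al /\ col_nat q (z + δ) = be.
Proof.
move=> q2 δ0 δn Nn alq beq.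
have q0 : 0 < q by apply: leq_trans q2.
have q1 : 1 < q by apply: leq_trans q2.
have [t1 [d1 [e1 [d10 nd1]]]] := val_dec q1 δ0.
set K := q ^ 4 * q.+1 ^ 2 * M.+2.
case: (leqP (q ^ t1 * K) n) => h.
  have [R HR] := comb t1 q0 q1 (leq_trans q2 (leqnSn q)) (coprimenS q) (leqnn q) d10 nd1 alq beq.
  exists R, (q ^ (t1 + 4) * q.+1 ^ 2); split; first by rewrite muln_gt0 !expn_gt0 q0.
  split.
    apply: leq_trans h; rewrite /K expnD; apply: eq_leq; ring.
  by move=> z hz; rewrite e1; exact: HR.
have [t2 [d2 [e2 [d20 nd2]]]] := val_dec (ltnW (leq_trans q2 (leqnSn q)) : 1 < q.+1) δ0.
have copX : coprime (q ^ t1) (q.+1 ^ t2) by rewrite coprimeXl // coprimeXr // coprimenS.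
have dv : q ^ t1 * q.+1 ^ t2 %| δ.
  by rewrite Gauss_dvd // {1}e1 e2 !dvdn_mulr.
have le1 : q ^ t1 * q.+1 ^ t2 < q ^ t1 * K by apply: leq_ltn_trans (dvdn_leq δ0 dv) (ltn_trans δn h).
rewrite ltn_pmul2l ?expn_gt0 ?q0 // in le1.
have cop2 : coprime q.+1 q by rewrite coprime_sym coprimenS.
have [R HR] := comb t2 q0 (ltnW (leq_trans q2 (leqnSn q)) : 1 < q.+1) q2
   cop2 (leqnSn q) d20 nd2 alq beq.
exists R, (q.+1 ^ (t2 + 4) * q ^ 2); split; first by rewrite muln_gt0 !expn_gt0 q0.
split.
  apply: leq_trans Nn; rewrite /NP expnD -/K.
  rewrite (_ : q.+1 ^ t2 * q.+1 ^ 4 * q ^ 2 * M.+2 = q.+1 ^ t2 * (q.+1 ^ 4 * q ^ 2 * M.+2)); last by ring.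
  by rewrite leq_mul2r ltnW // orbT.
move=> z hz; rewrite /col_nat [phi q _ + _]addnC [phi q (_ + δ) + _]addnC e2; exact: HR.
Qed.

Definition colP q (q0 : 0 < q) n (u v : 'I_n) : 'I_q :=
  Ordinal (ltn_pmod (phi q (u + v) + phi q.+1 (u + v)) q0).

Lemma colP_sym q (q0 : 0 < q) n : @sym_colouring n q (@colP q q0 n).
Proof. by rewrite /sym_colouring => u v; apply/val_eqP => /=; rewrite [u + v]addnC. Qed.

Lemma ext_lt q (q0 : 0 < q) M n (a b : 'I_n) (al be : 'I_q) (F : seq 'I_n) :
  2 < q -> a < b -> NP q M <= n -> size F <= M ->
  exists x : 'I_n, x \notin F /\ colP q0 a x = al /\ colP q0 b x = be.
Proof.
move=> q2 ab Nn sF.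
have δ0 : 0 < b - a by rewrite subn_gt0.
have δn : b - a < n by apply: leq_ltn_trans (leq_subr _ _) (ltn_ord b).
have [R [P [P0 [PM HP]]]] := Pnat q2 δ0 δn Nn (ltn_ord al) (ltn_ord be).
pose w := a.+1 + ((R %% P + (P - a.+1 %% P)) %% P).
have wm : w %% P = R %% P by rewrite /w addnC modfix // ltn_mod.
have wlt : w <= a + P.
  have := ltn_mod (R %% P + (P - a.+1 %% P)) P; rewrite P0 /w.
  move: ((R %% P + (P - a.+1 %% P)) %% P) => X; lia.
pose zs := [seq w + P * i | i <- iota 0 M.+1].
have zs_in : forall z, z \in zs -> [/\ z %% P = R %% P, a < z & z - a < n].
  move=> z /mapP [i]; rewrite mem_iota add0n => /andP [_ iM] ->; split.
  - by rewrite addnC mulnC modnMDl.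
  - rewrite /w; move: ((R %% P + (P - a.+1 %% P)) %% P) => X; lia.
  - have h1 : P * i <= P * M by rewrite leq_mul2l -ltnS iM orbT.
    move: PM; rewrite !mulnS => PM; lia.
have aw : a < w by rewrite /w; move: ((R %% P + (P - a.+1 %% P)) %% P) => X; lia.
pose xs := [seq (w - a) + P * i | i <- iota 0 M.+1].
have xs_uniq : uniq xs.
  rewrite map_inj_uniq ?iota_uniq // => i j /eqP; rewrite eqn_add2l eqn_mul2l.
  by case/orP => [/eqP P00|/eqP //]; move: P0; rewrite P00.
have : ~~ all (fun x => x \in map val F) xs.
  apply/negP => /allP hall.
  have := uniq_leq_size xs_uniq hall; rewrite size_map size_map size_iota.
  by move=> h; move: (leq_trans h sF); rewrite ltnn.
case/allPn => x0 /mapP [i]; rewrite mem_iota add0n => /andP [_ iM] -> {x0} hnF.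
have zin : w + P * i \in zs by apply/mapP; exists i => //; rewrite mem_iota add0n iM.
have [zm za zn] := zs_in _ zin.
have xe : w - a + P * i = w + P * i - a by lia.
have xn : w - a + P * i < n by rewrite xe.
exists (Ordinal xn); split.
  by apply/negP => hF; move: hnF; rewrite (map_f val hF).
have [h1 h2] := HP _ zm.
have e1 : a + (w - a + P * i) = w + P * i by lia.
have e2 : b + (w - a + P * i) = w + P * i + (b - a) by lia.
by split; apply/val_eqP => /=; [rewrite e1; apply/eqP; exact: h1 | rewrite e2; apply/eqP; exact: h2].
Qed.


Section Cyc.
Variables (n m : nat) (c : 'I_n -> 'I_n -> 'I_m).

Definition pc (x : 'I_n) (p : seq 'I_n) : seq 'I_m :=
  [seq c e.1 e.2 | e <- zip (belast x p) p].

Lemma cc_rcons x p : cycle_colours c (x :: p) = rcons (pc x p) (c (last x p) x).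
Proof.
rewrite /cycle_colours /pc rot1_cons lastI zip_rcons ?size_belast //.
by rewrite map_rcons.
Qed.

Lemma pc_ext x p y z : pc x (p ++ [:: y; z]) = pc x p ++ [:: c (last x p) y; c y z].
Proof.
rewrite /pc belast_cat zip_cat ?size_belast // map_cat.
by [].
Qed.

End Cyc.

Section Build.
Variables (n m : nat) (c : 'I_n -> 'I_n -> 'I_m).
Hypothesis csym : sym_colouring c.
Variable Mx : nat.
Hypothesis ext : forall a b : 'I_n, a != b -> forall (al be : 'I_m) (F : seq 'I_n),
  size F <= Mx -> exists x, x \notin F /\ c a x = al /\ c b x = be.
Variables (ss : seq 'I_n) (cs : seq 'I_m).
Hypothesis ss_uniq : uniq ss.
Hypothesis size_cs : size cs = (size ss).-1.*2.
Hypothesis Mx_big : size ss * 3 <= Mx.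
Variable x0 : 'I_n.
Hypothesis ss0 : 0 < size ss.

Let s0 := nth x0 ss 0.

Lemma build i : i < size ss -> exists p : seq 'I_n,
  uniq (s0 :: p) /\ size p = i.*2 /\ last s0 p = nth x0 ss i /\
      pc c s0 p = take i.*2 cs /\
      (forall v, v \in s0 :: p -> v \in ss -> index v ss <= i) /\
      (forall j, j <= i -> nth x0 ss j \in s0 :: p).
Proof.
elim: i => [|i IH] hi.
  exists [::]; split; [|split; [|split; [|split; [|split]]]] => //.
  - by rewrite /pc /= take0.
  - by move=> v; rewrite inE => /eqP ->; rewrite /s0 index_uniq.
  - by move=> j; rewrite leqn0 => /eqP ->; rewrite inE.
have [p [up [sp [lp [pcp [ip mp]]]]]] := IH (ltnW hi).
set a := nth x0 ss i; set b := nth x0 ss i.+1.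
have ab : a != b by rewrite /a /b nth_uniq ?(ltnW hi) // neq_ltn ltnSn.
have sF : size (s0 :: p ++ ss) <= Mx.
  rewrite /= size_cat sp; move: Mx_big hi; rewrite -!muln2; lia.
have [y [yF [ya yb]]] := @ext a b ab (nth (c x0 x0) cs i.*2) (nth (c x0 x0) cs i.*2.+1) (s0 :: p ++ ss) sF.
move: yF; rewrite inE negb_or mem_cat negb_or => /and3P [ys0 yp yss].
have bnot : b \notin s0 :: p.
  apply/negP => hb; have := ip b hb (mem_nth _ hi).
  by rewrite /b index_uniq // ltnn.
have yb' : y != b by apply/negP => /eqP e; move: yss; rewrite e mem_nth.
exists (p ++ [:: y; b]); split; [|split; [|split; [|split; [|split]]]].
- have yn : y \notin s0 :: p by rewrite inE negb_or ys0.
  by rewrite -cat_cons cat_uniq up /= (negbTE yn) (negbTE bnot) /= inE yb'.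
- by rewrite size_cat sp /= addn2 doubleS.
- by rewrite last_cat.
- rewrite pc_ext pcp lp -/a ya csym yb.
  have h1 : i.*2 < size cs by rewrite size_cs -!muln2; move: hi; lia.
  have h2 : i.*2.+1 < size cs by rewrite size_cs -!muln2; move: hi; lia.
  rewrite (take_nth (c x0 x0) h2) (take_nth (c x0 x0) h1) -cats1 -cats1 -catA.
  by [].
- move=> v; rewrite -cat_cons mem_cat => /orP [hv vs|].
    by apply: leq_trans (ip v hv vs) _.
  rewrite !inE => /orP [/eqP ->|/eqP ->]; first by rewrite (negbTE yss).
  by rewrite index_uniq.
- move=> j; rewrite leq_eqVlt => /orP [/eqP ->|hj].
    by rewrite -cat_cons mem_cat !inE eqxx !orbT.
  by rewrite -cat_cons mem_cat mp.
Qed.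

End Build.

Lemma rainbow_ok n m k (c : 'I_n -> 'I_n -> 'I_m) :
  sym_colouring c -> 2 <= k -> m = k.*2.-1 ->
  (forall a b : 'I_n, a != b -> forall (al be : 'I_m) (F : seq 'I_n),
     size F <= k * 3 -> exists x, x \notin F /\ c a x = al /\ c b x = be) ->
  @k_rainbow_cycle_colouring n k m c.
Proof.
move=> csym k2 mk ext S cS.
have : 0 < #|S| by rewrite cS; apply: leq_trans k2.
case/card_gt0P => x0 _.
set ss := enum S.
have sss : size ss = k by rewrite -cS cardE.
have ss0 : 0 < size ss by rewrite sss; apply: leq_trans k2.
set γ := c (nth x0 ss k.-1) (nth x0 ss 0).
set cs := enum (predC1 γ).
have scs : size cs = (size ss).-1.*2.
  rewrite -cardE cardC1 card_ord sss mk; case: k k2 {mk ext cS sss ss0 γ cs} => // k' _.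
have hk : k.-1 < size ss by rewrite sss prednK // ltnW.
have [p [up [sp [lp [pcp [ip mp]]]]]] :=
  build csym ext (enum_uniq S) scs (eq_leq (congr1 (muln^~ 3) sss)) x0 ss0 hk.
exists (nth x0 ss 0 :: p); apply/andP; split.
  rewrite /rainbow_cycle /is_cycle up /= sp; apply/andP; split.
    by rewrite -muln2; move: k2; lia.
  rewrite cc_rcons pcp lp take_oversize ?scs ?sss //.
  by rewrite rcons_uniq enum_uniq andbT mem_enum inE negbK.
apply/subsetP => v vS; rewrite inE.
have vss : v \in ss by rewrite mem_enum.
have := mp (index v ss) _; rewrite nth_index //; apply.
by have := index_mem v ss; rewrite vss sss; move: k2; lia.
Qed.

Lemma upper_b k n : 3 <= k -> NP (2 * k - 1) (k * 3) <= n -> crx_colourable n k (2 * k - 1).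
Proof.
move=> k3 Nn.
have q0 : 0 < 2 * k - 1 by lia.
have q2 : 2 < 2 * k - 1 by lia.
exists (colP q0 (n:=n)); split; first exact: colP_sym.
apply: rainbow_ok; first exact: colP_sym.
- by apply: leq_trans k3.
- by rewrite -muln2; lia.
move=> a b ab al be F sF.
case: (ltngtP a b) => [lt|gt|eq]; first exact: (ext_lt q0 al be q2 lt Nn sF).
- have [x [xF [h1 h2]]] := ext_lt q0 be al q2 gt Nn sF.
  by exists x.
- by move: ab; rewrite (val_inj eq) eqxx.
Qed.

Lemma count_sub_in (T : eqType) (a b : pred T) (s : seq T) :
  {in s, forall x, a x -> b x} -> count a s <= count b s.
Proof.
elim: s => //= x s IH h.
rewrite leq_add //; last by apply: IH => y ys; apply: h; rewrite inE ys orbT.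
by case ax: (a x) => //; rewrite (h x) ?inE ?eqxx.
Qed.

Lemma uniq_size_le (m : nat) (s : seq 'I_m) : uniq s -> size s <= m.
Proof. by move/card_uniqP <-; apply: leq_trans (max_card _) _; rewrite card_ord. Qed.

Lemma size_cc n m (c : 'I_n -> 'I_n -> 'I_m) s : size (cycle_colours c s) = size s.
Proof. by rewrite /cycle_colours size_map size_zip size_rot minnn. Qed.

Lemma rainbow_ge3 n m (c : 'I_n -> 'I_n -> 'I_m) s : rainbow_cycle c s -> 3 <= m.
Proof.
case/andP => /andP [_ s3] uc; apply: leq_trans s3 _.
by rewrite -(size_cc c) uniq_size_le.
Qed.

Lemma zip_rot1 (T : Type) (x : T) p :
  zip (x :: p) (rot 1 (x :: p)) = rcons (zip (belast x p) p) (last x p, x).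
Proof. by rewrite rot1_cons lastI zip_rcons ?size_belast. Qed.

Lemma zip_neq (T : eqType) (x : T) p : uniq (x :: p) ->
  forall e, e \in zip (belast x p) p -> e.1 != e.2.
Proof.
elim: p x => //= y p IH x /andP [xn up] e; rewrite inE => /orP [/eqP -> /=|].
  by apply/negP => /eqP e'; move: xn; rewrite e' inE eqxx.
exact: IH.
Qed.

Lemma count_mem_set n (S : {set 'I_n}) (s : seq 'I_n) :
  uniq s -> S \subset [set x in s] -> count (mem S) s = #|S|.
Proof.
move=> us /subsetP sub; rewrite -size_filter -(card_uniqP _); last exact: filter_uniq.
apply: eq_card => x; rewrite mem_filter; apply/andP/idP => [[] //|xS]; split => //.
by have := sub x xS; rewrite inE.
Qed.

Lemma mono_contra n m k (c : 'I_n -> 'I_n -> 'I_m) (S : {set 'I_n}) (j : 'I_m) s :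
  #|S| = k -> m <= k.*2 - 2 ->
  (forall u v, u \in S -> v \in S -> u != v -> c u v = j) ->
  rainbow_cycle c s -> S \subset [set x in s] -> False.
Proof.
move=> cS mk mono rc sub.
move: (rc) => /andP [/andP [us s3] uc].
have sm : size s <= m by rewrite -(size_cc c) uniq_size_le.
case: s us s3 uc sub sm rc => // x p us s3 uc sub sm rc.
set es := zip (x :: p) (rot 1 (x :: p)).
have ses : size es = (size p).+1 by rewrite /es size_zip size_rot minnn.
have c1 : count (fun e => e.1 \in S) es = k.
  rewrite -cS -(count_mem_set us sub) /es.
  rewrite -[in RHS](unzip1_zip (_ : size (x :: p) <= size (rot 1 (x :: p)))) ?size_rot //.
  by rewrite count_map.
have c2 : count (fun e => e.2 \in S) es = k.
  rewrite -cS -(count_mem_set us sub) /es.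
  have -> : count (mem S) (x :: p) = count (mem S) (rot 1 (x :: p)).
    by rewrite /rot count_cat addnC -count_cat cat_take_drop.
  rewrite -[in RHS](unzip2_zip (_ : size (rot 1 (x :: p)) <= size (x :: p))) ?size_rot //.
  by rewrite count_map.
have cU := count_predUI (fun e : 'I_n * 'I_n => e.1 \in S) (fun e => e.2 \in S) es.
have cUle : count (predU (fun e : 'I_n * 'I_n => e.1 \in S) (fun e => e.2 \in S)) es <= size es.
  exact: count_size.
have c12 : 2 <= count (predI (fun e : 'I_n * 'I_n => e.1 \in S) (fun e => e.2 \in S)) es.
  move: cU cUle; rewrite c1 c2 ses; move: sm mk => /= sm mk; rewrite -!muln2 in mk; lia.
have neq : forall e, e \in es -> e.1 != e.2.
  move=> e; rewrite /es zip_rot1 mem_rcons inE => /orP [/eqP -> /=|]; last exact: zip_neq.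
  case: p {es ses c1 c2 cU cUle c12 uc sub sm rc} us s3 => [|y p] us s3.
    by [].
  apply/negP => /eqP e'; move: us => /= /andP [+ _]; rewrite -e'.
  by rewrite (mem_last y p) ?inE. 
have cj : 2 <= count_mem j (cycle_colours c (x :: p)).
  apply: leq_trans c12 _; rewrite /cycle_colours count_map.
  apply: count_sub_in => e ee /andP [h1 h2] /=.
  by rewrite (mono _ _ h1 h2 (neq e ee)).
by move: cj; rewrite (count_uniq_mem j uc); case: (j \in _).
Qed.

Lemma pairwise_mem (T : eqType) (r : rel T) (s : seq T) x y :
  pairwise r s -> x \in s -> y \in s -> x != y -> r x y || r y x.
Proof.
elim: s => //= z s IH /andP [/allP hz ps]; rewrite !inE.
case/orP => [/eqP ->|xs]; case/orP => [/eqP ->|ys]; first by rewrite eqxx.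
- by move=> _; rewrite hz.
- by move=> _; rewrite (hz x xs) orbT.
- exact: IH.
Qed.

Section Ramsey.
Variables (n m : nat) (c : 'I_n -> 'I_n -> 'I_m).
Hypothesis csym : sym_colouring c.
Hypothesis m0 : 0 < m.

Definition rr (p1 p2 : 'I_n * 'I_m) := c p1.1 p2.1 == p1.2.

Lemma greedy t : forall A : {set 'I_n}, m.+1 ^ t <= #|A| ->
  exists ps : seq ('I_n * 'I_m), [/\ size ps = t, uniq (map fst ps),
    {subset map fst ps <= A} & pairwise rr ps].
Proof.
elim: t => [|t IH] A hA; first by exists [::].
have : 0 < #|A| by apply: leq_trans hA; rewrite expn_gt0.
case/card_gt0P => v vA.
set B := A :\ v.
have cB : #|A| = #|B|.+1 by rewrite (cardsD1 v A) vA.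
have hsum : #|B| = \sum_(j < m) #|[set w in B | c v w == j]|.
  rewrite -sum1_card (partition_big (fun w => c v w) predT) //=.
  apply: eq_bigr => j _; rewrite -sum1_card; apply: eq_bigl => w; by rewrite inE.
have [j hj] : exists j : 'I_m, m.+1 ^ t <= #|[set w in B | c v w == j]|.
  case: (boolP [exists j : 'I_m, m.+1 ^ t <= #|[set w in B | c v w == j]|]) => [/existsP //|].
  rewrite negb_exists => /forallP hall; exfalso.
  have : #|B| <= \sum_(j < m) (m.+1 ^ t).-1.
    rewrite hsum; apply: leq_sum => j _.
    have := hall j; rewrite -ltnNge; move: (m.+1 ^ t) => X; lia.
  rewrite sum_nat_const card_ord -subn1 mulnBr muln1; move: hA; rewrite cB expnS mulSn.
  have X0 : 0 < m.+1 ^ t by rewrite expn_gt0.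
  have hY : m <= m * m.+1 ^ t by rewrite leq_pmulr.
  move: (m * m.+1 ^ t) (m.+1 ^ t) X0 hY => Y X; lia.
have [ps [sps ups sub pps]] := IH _ hj.
exists ((v, j) :: ps); split => //=.
- by rewrite sps.
- rewrite ups andbT; apply/negP => /sub; rewrite !inE eqxx. by [].
- move=> w; rewrite inE => /orP [/eqP ->|/sub]; first by [].
  by rewrite !inE => /andP [/andP [_ h] _].
- rewrite pps andbT; apply/allP => p pin /=; rewrite /rr /=.
  have := sub p.1 (map_f _ pin); rewrite !inE.
  by case/andP => _ ->.
Qed.

End Ramsey.

Lemma sum_count_col n m (ps : seq ('I_n * 'I_m)) :
  size ps = \sum_(j < m) count (fun p => p.2 == j) ps.
Proof.
elim: ps => [|x ps IH] /=; first by rewrite big1.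
rewrite big_split /= -IH -add1n; congr (_ + _).
rewrite (bigD1 x.2) //= eqxx big1 // => j /negbTE.
by rewrite eq_sym => ->.
Qed.

Lemma ramsey n m k (c : 'I_n -> 'I_n -> 'I_m) : sym_colouring c -> 0 < m ->
  m.+1 ^ (m * k).+1 <= n ->
  exists S : {set 'I_n}, #|S| = k /\ exists j, forall u v, u \in S -> v \in S -> u != v -> c u v = j.
Proof.
move=> csym m0 hn.
have hA : m.+1 ^ (m * k).+1 <= #|[set: 'I_n]| by rewrite cardsT card_ord.
have [ps [sps ups _ pps]] := greedy c m0 (A := setT) (t := (m * k).+1) hA.
have [j hj] : exists j : 'I_m, k < count (fun p => p.2 == j) ps.
  case: (boolP [exists j : 'I_m, k < count (fun p => p.2 == j) ps]) => [/existsP //|].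
  rewrite negb_exists => /forallP hall; exfalso.
  have : size ps <= \sum_(j < m) k.
    rewrite sum_count_col; apply: leq_sum => j _; by rewrite leqNgt hall.
  by rewrite sum_nat_const card_ord sps mulnC ltnn.
set psj := [seq p <- ps | p.2 == j].
set ws := take k (map fst psj).
have uws : uniq ws.
  apply: take_uniq; apply: subseq_uniq ups; apply: map_subseq; exact: filter_subseq.
have sws : size ws = k by rewrite size_take size_map size_filter hj.
exists [set x in ws]; split; first by rewrite cardsE (card_uniqP uws).
exists j => u v; rewrite !inE => /mem_take /mapP [pu pui ->] /mem_take /mapP [pv pvi ->] neq.
have ppj : pairwise (rr c) psj by apply: pairwise_filter.
have pun : pu != pv by apply: contraNneq neq => ->.
move: pui pvi; rewrite !mem_filter => /andP [/eqP pu2 pui] /andP [/eqP pv2 pvi].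
have hu : pu \in psj by rewrite mem_filter pu2 eqxx.
have hv : pv \in psj by rewrite mem_filter pv2 eqxx.
case/orP: (pairwise_mem ppj hu hv pun); rewrite /rr.
- by rewrite pu2 => /eqP.
- by rewrite pv2 csym => /eqP.
Qed.

Section PartA.
Variable n : nat.
Hypothesis n3 : 3 <= n.

Definition BB := if odd n then n else n - 4.
Definition blk i j := if i + j == 3 then 2 else if odd (i + j) then 0 else 1.
Definition fa u v := if BB <= u then blk (u - BB) (v - BB)
  else if odd u then 0 else if v == u.+1 then 1 else 2.
Definition FA u v := if u < v then fa u v else fa v u.

Lemma FA_sym u v : FA u v = FA v u.
Proof.
rewrite /FA; case: (ltngtP u v) => // [->] //.
Qed.

Lemma fa_lt3 u v : fa u v < 3.
Proof. by rewrite /fa /blk; repeat case: ifP. Qed.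

Definition cA (u v : 'I_n) : 'I_3 := inord (FA u v).

Lemma cA_sym : @sym_colouring n 3 cA.
Proof. by rewrite /sym_colouring => u v; rewrite /cA FA_sym. Qed.

Lemma BBn : BB <= n. Proof. by rewrite /BB; case: ifP => //; rewrite leq_subr. Qed.
Lemma BBodd u : u < BB -> ~~ odd u -> u.+1 < n -> u.+1 < BB /\ u.+2 < n.
Proof.
rewrite /BB; case: ifP => on hu eu un.
  split => //; rewrite ltn_neqAle un andbT; apply/eqP => e.
  by move: on; rewrite -e /= negbK (negbTE eu).
have h4 : 4 <= n by move: hu; lia.
have ne : u.+1 != n - 4.
  apply/eqP => e; have : odd (n - 4) = odd n by rewrite oddB // addbF.
  by rewrite -e /= eu on.
move: hu ne; lia.
Qed.

Lemma blk_sym i j : blk i j = blk j i.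
Proof. by rewrite /blk addnC. Qed.

Lemma blk_tri i j l : i < 4 -> j < 4 -> l < 4 -> i != j -> j != l -> l != i ->
  uniq [:: blk i j; blk j l; blk l i].
Proof.
by do 4?[case: i => [|i]] => //; do 4?[case: j => [|j]] => //; do 4?[case: l => [|l]].
Qed.

Lemma blk_key i j : i < 4 -> j < 4 -> i != j ->
  exists l, [/\ l < 3, l != i, l != j & uniq [:: blk i j; blk j l; blk l i]].
Proof.
move=> hi hj hij.
exists (if (0 != i) && (0 != j) then 0 else if (1 != i) && (1 != j) then 1 else 2).
by move: hi hj hij; do 4?[case: i => [|i]] => //; do 4?[case: j => [|j]].
Qed.

Lemma FA_lt x y : x < y -> FA x y = fa x y.
Proof. by rewrite /FA => ->. Qed.
Lemma FA_gt x y : y < x -> FA x y = fa y x.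
Proof. by rewrite /FA => h; rewrite ltnNge ltnW. Qed.
Lemma fa_odd x y : x < BB -> odd x -> fa x y = 0.
Proof. by move=> h o; rewrite /fa leqNgt h o. Qed.
Lemma fa_S x : x < BB -> ~~ odd x -> fa x x.+1 = 1.
Proof. by move=> h /negbTE o; rewrite /fa leqNgt h o eqxx. Qed.
Lemma fa_far x y : x < BB -> ~~ odd x -> y != x.+1 -> fa x y = 2.
Proof. by move=> h /negbTE o /negbTE e; rewrite /fa leqNgt h o e. Qed.

Lemma FA_blk x y : BB <= x -> BB <= y -> FA x y = blk (x - BB) (y - BB).
Proof.
move=> hx hy; rewrite /FA /fa hx hy; case: ifP => // _.
by rewrite blk_sym.
Qed.

Lemma tri u v : u < v -> v < n ->
  exists w, [/\ w < n, w != u, w != v & uniq [:: FA u v; FA v w; FA w u]].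
Proof.
move=> uv vn.
case: (leqP BB u) => hu.
  have nodd : ~~ odd n by apply/negP => on; move: hu; rewrite /BB on; lia.
  have eB : BB = n - 4 by rewrite /BB (negbTE nodd).
  have i4 : u - BB < 4 by move: hu uv vn; rewrite eB; lia.
  have j4 : v - BB < 4 by move: hu uv vn; rewrite eB; lia.
  have ij : u - BB != v - BB by apply/eqP; lia.
  have [l [l3 li lj ul]] := blk_key i4 j4 ij.
  exists (BB + l); split.
  - move: l3 hu uv vn; rewrite eB; lia.
  - by apply/eqP => e; move: li; rewrite -e addKn eqxx.
  - by apply/eqP => e; move: lj; rewrite -e addKn eqxx.
  by rewrite !FA_blk ?leq_addr ?(leq_trans hu (ltnW uv)) // addKn.
case ou: (odd u).
  have u0 : 0 < u by case: u ou {uv hu}.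
  have w1 : u.-1 < BB by apply: leq_ltn_trans (leq_pred u) hu.
  have ow : ~~ odd u.-1 by case: u ou u0 {uv hu w1} => //= u' ->.
  have wu : u.-1 < u by rewrite prednK.
  have wv : u.-1 < v by apply: ltn_trans wu uv.
  exists u.-1; split.
  - exact: ltn_trans wv vn.
  - by rewrite neq_ltn wu.
  - by rewrite neq_ltn wv.
  rewrite (FA_lt uv) (FA_gt wv) (FA_lt wu) (fa_odd _ hu) ?ou //.
  rewrite (fa_far w1 ow); last by rewrite prednK // neq_ltn uv orbT.
  by have -> : fa u.-1 u = 1 by rewrite -{2}(prednK u0) fa_S.
case: (eqVneq v u.+1) => [ev|nv].
  have un : u.+1 < n by rewrite -ev.
  have [vB wn] := BBodd hu (negbT ou) un.
  have ov : odd u.+1 by rewrite /= ou.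
  exists u.+2; split => //.
  - by rewrite neq_ltn ltnS leqnSn orbT.
  - by rewrite ev neq_ltn ltnSn orbT.
  have uw : u < u.+2 by rewrite ltnS leqnSn.
  have vw : v < u.+2 by rewrite ev.
  rewrite (FA_lt uv) (FA_lt vw) (FA_gt uw) ev (fa_odd _ vB ov) (fa_S hu (negbT ou)).
  by rewrite (fa_far hu (negbT ou)) // neq_ltn ltnSn orbT.
have uv1 : u.+1 < v by rewrite ltn_neqAle eq_sym nv uv.
have [wB _] := BBodd hu (negbT ou) (ltn_trans uv1 vn).
have uw : u < u.+1 by [].
exists u.+1; split.
- exact: ltn_trans uv1 vn.
- by rewrite neq_ltn ltnSn orbT.
- by rewrite neq_ltn uv1.
rewrite (FA_lt uv) (FA_gt uv1) (FA_gt uw) (fa_far hu (negbT ou) nv).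
by rewrite (fa_odd _ wB) /= ?ou // (fa_S hu (negbT ou)).
Qed.

End PartA.

Lemma exists_kset n k : k <= n -> exists S : {set 'I_n}, #|S| = k.
Proof.
move=> kn; exists [set x in take k (enum 'I_n)].
rewrite cardsE (card_uniqP _) ?take_uniq ?enum_uniq //.
by rewrite size_take size_enum_ord; case: ltngtP kn => // ->.
Qed.

Lemma lower_small n k m : 0 < k -> k <= n -> m < 3 -> ~ crx_colourable n k m.
Proof.
move=> k0 kn m3 [c [_ h]].
have [S cS] := exists_kset kn.
have [s /andP [rs _]] := h S cS.
by have := rainbow_ge3 rs; rewrite leqNgt m3.
Qed.

Section A2.
Variable n : nat.
Hypothesis n3 : 3 <= n.

Lemma inord3_uniq (a b c : nat) : a < 3 -> b < 3 -> c < 3 -> uniq [:: a; b; c] ->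
  uniq [:: (inord a : 'I_3); inord b; inord c].
Proof.
move=> ha hb hc u.
have -> : [:: (inord a : 'I_3); inord b; inord c] = map inord [:: a; b; c] by [].
rewrite map_inj_in_uniq // => x y; rewrite !inE => hx hy /(congr1 (@nat_of_ord 3)).
rewrite !inordK //.
  by case/or3P: hy => /eqP ->.
by case/or3P: hx => /eqP ->.
Qed.

Lemma FA_lt3 u v : FA n u v < 3.
Proof. by rewrite /FA; case: ifP => _; apply: fa_lt3. Qed.

Lemma triA_lt (u v : 'I_n) : u < v -> exists s, rainbow_cycle (cA (n:=n)) s && (u \in s) && (v \in s).
Proof.
move=> uv.
have [w [wn wu wv ut]] := tri n3 uv (ltn_ord v).
exists [:: u; v; Ordinal wn].
have h1 : u != v by rewrite -val_eqE /= neq_ltn uv.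
have h2 : u != Ordinal wn by rewrite -val_eqE /= eq_sym.
have h3 : v != Ordinal wn by rewrite -val_eqE /= eq_sym.
have hc : uniq (cycle_colours (cA (n:=n)) [:: u; v; Ordinal wn]).
  have -> : cycle_colours (cA (n:=n)) [:: u; v; Ordinal wn] = [:: cA u v; cA v (Ordinal wn); cA (Ordinal wn) u] by [].
  by apply: inord3_uniq; rewrite ?FA_lt3.
by rewrite /rainbow_cycle /is_cycle hc andbT /= !inE (negbTE h1) (negbTE h2) (negbTE h3) !eqxx /= ?orbT.
Qed.

Lemma triA (u v : 'I_n) : u != v -> exists s, rainbow_cycle (cA (n:=n)) s && (u \in s) && (v \in s).
Proof.
move=> uv'; case: (ltngtP u v) => [uv|vu|e].
- exact: triA_lt.
- by have [s /andP [/andP [h1 h2] h3]] := triA_lt vu; exists s; rewrite h1 h2 h3.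
- by move: uv'; rewrite -val_eqE /= e eqxx.
Qed.

Lemma colourable12 k : 0 < k -> k <= 2 -> crx_colourable n k 3.
Proof.
move=> k0 k2; exists (cA (n:=n)); split; first exact: cA_sym.
move=> S cS.
have : k = 1 \/ k = 2 by lia.
case=> ek; rewrite ek in cS.
  have /cards1P [x ->] : #|S| == 1 by rewrite cS.
  have : 0 < #|predC1 x| by rewrite cardC1 card_ord; lia.
  case/card_gt0P => y; rewrite !inE => yx.
  have [s /andP [/andP [r ys] xs]] := triA yx.
  by exists s; rewrite r /=; apply/subsetP => z; rewrite !inE => /eqP ->.
have /cards2P [x [y [xy ->]]] : #|S| == 2 by rewrite cS.
have [s /andP [/andP [r xs] ys]] := triA xy.
by exists s; rewrite r /=; apply/subsetP => z; rewrite !inE => /orP [] /eqP ->.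
Qed.

End A2.

Theorem theorem3p2 :
  (forall n : nat, 3 <= n -> crx_Kn_eq 1 n 3 /\ crx_Kn_eq 2 n 3) /\
  (forall k : nat, 3 <= k ->
     exists N : nat, forall n : nat, N <= n -> crx_Kn_eq k n (2 * k - 1)).
Proof.
split.
  move=> n n3; split; split.
  - exact: colourable12.
  - by move=> m' m3; apply: lower_small => //; apply: leq_trans n3.
  - exact: colourable12.
  - by move=> m' m3; apply: lower_small => //; apply: leq_trans n3.
move=> k k3.
exists (maxn (NP (2 * k - 1) (k * 3)) ((2 * k - 1) ^ ((2 * k - 2) * k).+1)) => n.
rewrite geq_max => /andP [h1 h2]; split; first exact: upper_b.
move=> m' mk [c [csym h]].
have n0 : 0 < n.
  apply: leq_trans h2; rewrite expn_gt0; apply/orP; left; lia.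
case: (posnP m') => [m0|m0].
  subst m'; by case: (c (Ordinal n0) (Ordinal n0)).
have hn : m'.+1 ^ (m' * k).+1 <= n.
  apply: leq_trans h2; apply: leq_trans (_ : (2 * k - 1) ^ (m' * k).+1 <= _).
    by rewrite leq_exp2r //; lia.
  apply: leq_pexp2l; first lia.
  by rewrite ltnS leq_mul2r; apply/orP; right; lia.
have [S [cS [j mono]]] := ramsey csym m0 hn.
have [s /andP [rs sub]] := h S cS.
apply: (mono_contra (k := k) cS _ mono rs sub).
rewrite -muln2; lia.
Qed.
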